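(* Under the standing assumptions, for every $j$ with $1\le j\le n-1$ and every $z\in\mathbb C$, \begin{align*} \widehat\alpha_2^{(2j)}(z)&=\widehat\alpha_2^{(2j-2)}(z)+(z-a)\,Q_{2,j}^*(\bar z)\,\widehat H_{2,j}^{-1}\,P_{2,j}(a),\\ \widehat\beta_2^{(2j)}(z)&=\widehat\beta_2^{(2j-2)}(z)+(z-a)\,Q_{2,j}^*(\bar z)\,\widehat H_{2,j}^{-1}\,Q_{2,j}(a),\\ \widehat\gamma_2^{(2j)}(z)&=\widehat\gamma_2^{(2j-2)}(z)-(z-a)\,P_{2,j}^*(\bar z)\,\widehat H_{2,j}^{-1}\,P_{2,j}(a),\\ \widehat\delta_2^{(2j)}(z)&=\widehat\delta_2^{(2j-2)}(z)-(z-a)\,P_{2,j}^*(\bar z)\,\widehat H_{2,j}^{-1}\,Q_{2,j}(a). \end{align*}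
   Context: Let $q,n\in\mathbb N$ and let $a<b$ be real numbers. All matrices are complex; $I_q$, $0_q$ are the $q\times q$ identity and zero matrices; for a matrix-valued function $F$, $F^*(\bar z)$ means $(F(\bar z))^*$. Let $s_0,\dots,s_{2n+1}$ be Hermitian $q\times q$ matrices and set $\widehat s_j:=-ab\,s_j+(a+b)s_{j+1}-s_{j+2}$. Define the block Hankel matrices $H_{1,j}:=(s_{l+k})_{l,k=0}^{j}$, $H_{2,j}:=(\widehat s_{l+k})_{l,k=0}^{j}$, $K_{1,j}:=(bs_{l+k}-s_{l+k+1})_{l,k=0}^{j}$, $K_{2,j}:=(-as_{l+k}+s_{l+k+1})_{l,k=0}^{j}$. Standing assumption: $H_{1,n},H_{2,n-1},K_{1,n},K_{2,n}$ are positive definite. Let $T_0:=0_q$ and, for $j\ge1$, let $T_j$ be the $(j+1)\times(j+1)$ block matrix (blocks of size $q\times q$) with $I_q$ in the block positions $(l+1,l)$, $l=0,\dots,j-1$, and $0_q$ elsewhere; $R_j(z):=(I_{(j+1)q}-zT_j)^{-1}$; $v_j:=\mathrm{col}(I_q,0_q,\dots,0_q)\in\mathbb C^{(j+1)q\times q}$. Let $u_{2,0}:=-(a+b)s_0+s_1$ and $u_{2,j}:=\mathrm{col}(u_{2,0},-\widehat s_0,\dots,-\widehat s_{j-1})\in\mathbb C^{(j+1)q\times q}$. For $j\ge1$ let $Y_{2,j}:=\mathrm{col}(\widehat s_j,\dots,\widehat s_{2j-1})$. Schur complements: $\widehat H_{2,0}:=\widehat s_0$, $\widehat H_{2,j}:=\widehat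 s_{2j}-Y_{2,j}^*H_{2,j-1}^{-1}Y_{2,j}$ ($j\ge1$). Polynomials: $P_{2,0}:=I_q$, $Q_{2,0}(z):=-(u_{2,0}+zs_0)$, and for $j\ge1$: $P_{2,j}(z):=(-Y_{2,j}^*H_{2,j-1}^{-1},\,I_q)R_j(z)v_j$, $Q_{2,j}(z):=-(-Y_{2,j}^*H_{2,j-1}^{-1},\,I_q)R_j(z)(u_{2,j}+zv_js_0)$. For $0\le j\le n-1$ the $2q\times 2q$ matrix polynomial $\widehat U_2^{(2j)}=\begin{pmatrix}\widehat\alpha_2^{(2j)}&\widehat\beta_2^{(2j)}\\ \widehat\gamma_2^{(2j)}&\widehat\delta_2^{(2j)}\end{pmatrix}$ is defined by $\widehat\alpha_2^{(2j)}(z)=I_q-(z-a)(u_{2,j}^*+zs_0v_j^* )R_j^*(\bar z)H_{2,j}^{-1}R_j(a)v_j$, $\widehat\beta_2^{(2j)}(z)=(z-a)\big(s_0+(u_{2,j}^*+zs_0v_j^* )R_j^*(\bar z)H_{2,j}^{-1}R_j(a)(u_{2,j}+av_js_0)\big)$, $\widehat\gamma_2^{(2j)}(z)=-(z-a)v_j^*R_j^*(\bar z)H_{2,j}^{-1}R_j(a)v_j$, $\widehat\delta_2^{(2j)}(z)=I_q+(z-a)v_j^*R_j^*(\bar z)H_{2,j}^{-1}R_j(a)(u_{2,j}+av_js_0)$. *)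

(* Defs.v *)
(* Complex matrices are modelled over an arbitrary
   numClosedFieldType C (e.g. algC), with Num.conj as complex conjugation. *)
From HB Require Import structures.
From mathcomp Require Import all_boot all_order all_algebra.
Set Implicit Arguments. Unset Strict Implicit. Unset Printing Implicit Defensive.
Import Order.TTheory GRing.Theory Num.Theory.
Local Open Scope ring_scope.

Section Defs.
Variables (C : numClosedFieldType) (q : nat).

Definition adjmx m p (A : 'M[C]_(m, p)) : 'M[C]_(p, m) := (map_mx Num.conj A)^T.

Definition posdef m (A : 'M[C]_m) : Prop :=
  A = adjmx A /\ forall v : 'cV[C]_m, v != 0 -> 0 < (adjmx v *m A *m v) 0 0.

Definition bdim (j : nat) : nat := (\sum_(l < j.+1) q)%N.

Definition blk (j : nat) (B : nat -> nat -> 'M[C]_q) : 'M[C]_(bdim j) :=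
  @mxblock C j.+1 j.+1 (fun _ => q) (fun _ => q) (fun l k => B l k).

Definition bcol (j : nat) (B : nat -> 'M[C]_q) : 'M[C]_(bdim j, q) :=
  @mxcol C j.+1 (fun _ => q) q (fun l => B l).

Variables (a b : C) (s : nat -> 'M[C]_q).

Definition shat (k : nat) : 'M[C]_q :=
  (- (a * b)) *: s k + (a + b) *: s k.+1 - s k.+2.

Definition H1 j := blk j (fun l k => s (l + k)).
Definition H2 j := blk j (fun l k => shat (l + k)).
Definition K1 j := blk j (fun l k => b *: s (l + k) - s (l + k).+1).
Definition K2 j := blk j (fun l k => - a *: s (l + k) + s (l + k).+1).

(* T_j (T_0 = 0_q is the case j = 0 of the same formula) *)
Definition Tm j := blk j (fun l k => if l == k.+1 then 1%:M else 0).
Definition Rm j (z : C) : 'M[C]_(bdim j) := invmx (1%:M - z *: Tm j).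
Definition vv j := bcol j (fun l => if l == 0%N then 1%:M else 0).
Definition u20 : 'M[C]_q := - (a + b) *: s 0 + s 1.
Definition u2 j := bcol j (fun l => if l == 0%N then u20 else - shat l.-1).

(* Y_{2,i+1} = col(shat_{i+1}, ..., shat_{2i+1}) *)
Definition Y2 i := bcol i (fun l => shat (i.+1 + l)).

Definition H2hat (j : nat) : 'M[C]_q :=
  match j with
  | 0 => shat 0
  | i.+1 => shat (j + j) - adjmx (Y2 i) *m invmx (H2 i) *m Y2 i
  end.

(* the row (-Y_{2,i+1}^* H_{2,i}^{-1}, I_q) of size q x bdim (i+1) *)
Definition prow (i : nat) : 'M[C]_(q, bdim i.+1) :=
  @mxrow C i.+2 (fun _ => q) q
    (fun l : 'I_i.+2 =>
       if (l < i.+1)%N then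
         @submxrow C i.+1 (fun _ => q) q
           (- adjmx (Y2 i) *m invmx (H2 i)) (inord l)
       else 1%:M).

Definition P2 (j : nat) (z : C) : 'M[C]_q :=
  match j with
  | 0 => 1%:M
  | i.+1 => prow i *m Rm i.+1 z *m vv i.+1
  end.

Definition Q2 (j : nat) (z : C) : 'M[C]_q :=
  match j with
  | 0 => - (u20 + z *: s 0)
  | i.+1 => - (prow i *m Rm i.+1 z *m (u2 i.+1 + z *: (vv i.+1 *m s 0)))
  end.

Definition alpha2 j (z : C) : 'M[C]_q :=
  1%:M - (z - a) *: ((adjmx (u2 j) + z *: (s 0 *m adjmx (vv j)))
     *m adjmx (Rm j (Num.conj z)) *m invmx (H2 j) *m Rm j a *m vv j).
Definition beta2 j (z : C) : 'M[C]_q :=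
  (z - a) *: (s 0 + (adjmx (u2 j) + z *: (s 0 *m adjmx (vv j)))
     *m adjmx (Rm j (Num.conj z)) *m invmx (H2 j) *m Rm j a
     *m (u2 j + a *: (vv j *m s 0))).
Definition gamma2 j (z : C) : 'M[C]_q :=
  - ((z - a) *: (adjmx (vv j) *m adjmx (Rm j (Num.conj z)) *m invmx (H2 j)
     *m Rm j a *m vv j)).
Definition delta2 j (z : C) : 'M[C]_q :=
  1%:M + (z - a) *: (adjmx (vv j) *m adjmx (Rm j (Num.conj z)) *m invmx (H2 j)
     *m Rm j a *m (u2 j + a *: (vv j *m s 0))).

End Defs.

(* Main.v *)
Require Import Defs.
From HB Require Import structures.
From mathcomp Require Import all_boot all_order all_algebra.
Import Order.TTheory GRing.Theory Num.Theory.
Local Open Scope ring_scope.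
Set Implicit Arguments. Unset Strict Implicit. Unset Printing Implicit Defensive.

Section Adj.
Variable C : numClosedFieldType.

Lemma adjmx_mul m n p (A : 'M[C]_(m,n)) (B : 'M[C]_(n,p)) :
  adjmx (A *m B) = adjmx B *m adjmx A.
Proof. by rewrite /adjmx map_mxM trmx_mul. Qed.

Lemma adjmxK m n (A : 'M[C]_(m,n)) : adjmx (adjmx A) = A.
Proof.
by apply/matrixP => i k; rewrite /adjmx !mxE conjCK.
Qed.

Lemma adjmxD m n (A B : 'M[C]_(m,n)) : adjmx (A + B) = adjmx A + adjmx B.
Proof. by rewrite /adjmx map_mxD linearD. Qed.

Lemma adjmxN m n (A : 'M[C]_(m,n)) : adjmx (- A) = - adjmx A.
Proof. by rewrite /adjmx map_mxN linearN. Qed.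

Lemma adjmxZ m n (c : C) (A : 'M[C]_(m,n)) : adjmx (c *: A) = Num.conj c *: adjmx A.
Proof. by rewrite /adjmx map_mxZ linearZ. Qed.

Lemma adjmx0 m n : adjmx (0 : 'M[C]_(m,n)) = 0.
Proof. by apply/matrixP => i k; rewrite /adjmx !mxE conjC0. Qed.

Lemma adjmx1 n : adjmx (1%:M : 'M[C]_n) = 1%:M.
Proof. by rewrite /adjmx map_mx1 trmx1. Qed.

Lemma adjmx_inv n (A : 'M[C]_n) : adjmx (invmx A) = invmx (adjmx A).
Proof. by rewrite /adjmx map_invmx trmx_inv. Qed.

Lemma posdef_herm n (M : 'M[C]_n) : posdef M -> adjmx M = M.
Proof. by case=> <-. Qed.

Lemma posdef_comp n m (M : 'M[C]_n) (P : 'M[C]_(m,n)) (Q : 'M[C]_(m,n)) :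
  posdef M -> Q *m adjmx P = 1%:M -> posdef (P *m M *m adjmx P).
Proof.
case=> HM Hp HQ; split.
  by rewrite !adjmx_mul adjmxK -HM mulmxA.
move=> v v0.
have w0 : adjmx P *m v != 0.
  apply: contraNneq v0 => h; by rewrite -[v]mul1mx -HQ -mulmxA h mulmx0.
by move: (Hp _ w0); rewrite adjmx_mul adjmxK !mulmxA.
Qed.

Lemma posdef_unit n (M : 'M[C]_n) : posdef M -> M \in unitmx.
Proof.
case=> HM Hp; rewrite unitmxE unitfE; apply/negP => /det0P [v v0 hv].
have w0 : adjmx v != 0.
  apply: contraNneq v0 => h; by rewrite -[v]adjmxK h adjmx0.
have := Hp _ w0; rewrite adjmxK hv mul0mx mxE.
by rewrite ltxx.
Qed.

End Adj.


Section Schur.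
Variables (C : numClosedFieldType) (q m N : nat).
Variables (E : 'M[C]_(m,N)) (e : 'M[C]_(q,N)) (H : 'M[C]_N) (A : 'M[C]_m)
  (Y : 'M[C]_(m,q)) (D : 'M[C]_q).
Hypotheses (hEE : E *m adjmx E = 1%:M) (hee : e *m adjmx e = 1%:M)
  (hEe : E *m adjmx e = 0) (heE : e *m adjmx E = 0)
  (hsum : adjmx E *m E + adjmx e *m e = 1%:M)
  (hA : E *m H *m adjmx E = A) (hY : E *m H *m adjmx e = Y)
  (hY' : e *m H *m adjmx E = adjmx Y) (hD : e *m H *m adjmx e = D)
  (Aunit : A \in unitmx) (Aherm : adjmx A = A).

Let S := D - adjmx Y *m invmx A *m Y.
Let P := - (adjmx Y *m invmx A *m E) + e.

Lemma EH : E *m H = A *m E + Y *m e.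
Proof.
by rewrite -[E *m H]mulmx1 -hsum mulmxDr !mulmxA hA hY.
Qed.

Lemma eH : e *m H = adjmx Y *m E + D *m e.
Proof.
by rewrite -[e *m H]mulmx1 -hsum mulmxDr !mulmxA hY' hD.
Qed.

Lemma PH : P *m H = S *m e.
Proof.
rewrite /P /S mulmxDl eH mulNmx -!mulmxA EH mulmxDr !mulmxA mulVmx //.
idtac.
by rewrite mul1mx mulmxDr opprD addrACA addNr add0r mulmxBl !mulmxA addrC.
Qed.

Lemma adjP : adjmx P = - (adjmx E *m invmx A *m Y) + adjmx e.
Proof.
by rewrite /P adjmxD adjmxN !adjmx_mul adjmxK adjmx_inv Aherm mulmxA.
Qed.

Lemma eadjP : e *m adjmx P = 1%:M.
Proof using hEE hee hEe heE hsum hA hY hY' hD Aunit Aherm.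
by rewrite adjP mulmxDr mulmxN !mulmxA heE !mul0mx oppr0 add0r hee.
Qed.

Lemma schur_hat : P *m H *m adjmx P = S.
Proof using hEE hee hEe heE hsum hA hY hY' hD Aunit Aherm. by rewrite PH -mulmxA eadjP mulmx1. Qed.

Lemma schur_inv : S \in unitmx ->
  invmx H = adjmx E *m invmx A *m E + adjmx P *m invmx S *m P.
Proof using hEE hee hEe heE hsum hA hY hY' hD Aunit Aherm.
move=> Su.
set M := _ + _.
have MH : M *m H = 1%:M.
  rewrite /M mulmxDl -!mulmxA PH EH.
  rewrite (mulmxA (invmx S)) mulVmx // mul1mx mulmxDr (mulmxA (invmx A)) mulVmx // mul1mx.
  rewrite adjP mulmxDl mulmxDr mulNmx !mulmxA -addrA addNKr.
  exact: hsum.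
have [Mu Hu] := mulmx1_unit MH.
by rewrite -[invmx H]mul1mx -MH -mulmxA mulmxV // mulmx1.
Qed.

End Schur.


Section Blocks.
Variables (C : numClosedFieldType) (q : nat).
Implicit Types (B : nat -> nat -> 'M[C]_q) (c : nat -> 'M[C]_q).

Definition gblk i k B : 'M[C]_(bdim q i, bdim q k) :=
  @mxblock C i.+1 k.+1 (fun _ => q) (fun _ => q) (fun l m => B l m).
Definition brow i c : 'M[C]_(q, bdim q i) :=
  @mxrow C i.+1 (fun _ => q) q (fun l => c l).

Lemma gblk_mul i k r B B' :
  gblk i k B *m gblk k r B' = gblk i r (fun l l' => \sum_(x < k.+1) B l x *m B' x l').
Proof. exact: mul_mxblock. Qed.

Lemma gblk_mulcol i k B c :
  gblk i k B *m bcol k c = bcol i (fun l => \sum_(x < k.+1) B l x *m c x).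
Proof. exact: mul_mxblock_mxrow. Qed.

Lemma brow_mulblk i k c B :
  brow i c *m gblk i k B = brow k (fun l => \sum_(x < i.+1) c x *m B x l).
Proof. exact: mul_mxrow_mxblock. Qed.

Lemma brow_mulcol i c c' : brow i c *m bcol i c' = \sum_(x < i.+1) c x *m c' x.
Proof. exact: mul_mxrow_mxcol. Qed.

Lemma bcol_mulrow i k c c' :
  bcol i c *m brow k c' = gblk i k (fun l l' => c l *m c' l').
Proof. exact: mul_mxcol_mxrow. Qed.

Lemma adj_gblk i k B : adjmx (gblk i k B) = gblk k i (fun l l' => adjmx (B l' l)).
Proof. by apply/matrixP => x y; rewrite /adjmx !mxE. Qed.

Lemma adj_bcol i c : adjmx (bcol i c) = brow i (fun l => adjmx (c l)).
Proof. by apply/matrixP => x y; rewrite /adjmx !mxE. Qed.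

Lemma adj_brow i c : adjmx (brow i c) = bcol i (fun l => adjmx (c l)).
Proof. by apply/matrixP => x y; rewrite /adjmx !mxE. Qed.

Lemma eq_gblk i k B B' : (forall l l', (l < i.+1)%N -> (l' < k.+1)%N -> B l l' = B' l l') ->
  gblk i k B = gblk i k B'.
Proof. by move=> h; apply: eq_mxblock => x y; apply: h. Qed.

Lemma eq_bcol i c c' : (forall l, (l < i.+1)%N -> c l = c' l) -> bcol i c = bcol i c'.
Proof. by move=> h; apply: eq_mxcol => x; apply: h. Qed.

Lemma eq_brow i c c' : (forall l, (l < i.+1)%N -> c l = c' l) -> brow i c = brow i c'.
Proof. by move=> h; apply: eq_mxrow => x; apply: h. Qed.

Lemma gblkD i k B B' : gblk i k B + gblk i k B' = gblk i k (fun l l' => B l l' + B' l l').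
Proof. by apply/matrixP => x y; rewrite !mxE. Qed.

Lemma gblk0 i k : gblk i k (fun _ _ => 0) = 0.
Proof. by apply/matrixP => x y; rewrite !mxE. Qed.

Lemma bcol0 i : bcol i (fun _ => (0 : 'M[C]_q)) = 0.
Proof. by apply/matrixP => x y; rewrite !mxE. Qed.

Lemma brow0 i : brow i (fun _ => (0 : 'M[C]_q)) = 0.
Proof. by apply/matrixP => x y; rewrite !mxE. Qed.

Definition dlt (l k : nat) : 'M[C]_q := if l == k then 1%:M else 0.

Lemma gblk1 i : gblk i i dlt = 1%:M.
Proof.
rewrite -(mxdiagZ (p_ := fun _ : 'I_i.+1 => q) 1); apply: eq_mxblock => x y.
by rewrite /dlt conform_mx_id.
Qed.

Lemma dltC l k : dlt l k = dlt k l.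
Proof. by rewrite /dlt eq_sym. Qed.

Lemma adj_dlt l k : adjmx (dlt l k) = dlt k l.
Proof. by rewrite /dlt eq_sym; case: eqP => _; rewrite ?adjmx1 ?adjmx0. Qed.

Lemma dlt_mul m l k (M : 'M[C]_(q,m)) : dlt l k *m M = if l == k then M else 0.
Proof. by rewrite /dlt; case: eqP; rewrite ?mul1mx ?mul0mx. Qed.

Lemma mul_dlt m l k (M : 'M[C]_(m,q)) : M *m dlt l k = if l == k then M else 0.
Proof. by rewrite /dlt; case: eqP; rewrite ?mulmx1 ?mulmx0. Qed.

Lemma sum_if (V : nmodType) N (F : 'I_N.+1 -> V) (k : nat) :
  \sum_(x < N.+1) (if (val x == k) then F x else 0) = if (k < N.+1)%N then F (inord k) else 0.
Proof.
rewrite -big_mkcond /=; case: ltnP => h.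
  rewrite (big_pred1 (inord k)) // => x /=; rewrite -val_eqE /= inordK //.
by rewrite big_pred0 // => x /=; apply/eqP => e; move: (ltn_ord x); rewrite e ltnNge h.
Qed.

Lemma sum_if' (V : nmodType) N (F : 'I_N.+1 -> V) (k : nat) :
  \sum_(x < N.+1) (if (k == val x) then F x else 0) = if (k < N.+1)%N then F (inord k) else 0.
Proof. by rewrite -sum_if; apply: eq_bigr => x _; rewrite eq_sym. Qed.

Definition Emx i := gblk i i.+1 dlt.
Definition evec i := brow i.+1 (fun k => dlt k i.+1).

Lemma adj_Emx i : adjmx (Emx i) = gblk i.+1 i dlt.
Proof. by rewrite adj_gblk; apply: eq_gblk => l l' _ _; rewrite adj_dlt dltC. Qed.

Lemma adj_evec i : adjmx (evec i) = bcol i.+1 (fun k => dlt k i.+1).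
Proof. by rewrite adj_brow; apply: eq_bcol => l _; rewrite adj_dlt dltC. Qed.

Lemma Emx_mul i k B : Emx i *m gblk i.+1 k B = gblk i k B.
Proof.
rewrite gblk_mul; apply: eq_gblk => l l' hl _.
under eq_bigr do rewrite dlt_mul eq_sym.
by rewrite sum_if (leqW hl) inordK //; exact: leqW.
Qed.

Lemma mul_adjEmx i k B : gblk k i.+1 B *m adjmx (Emx i) = gblk k i B.
Proof.
rewrite adj_Emx gblk_mul; apply: eq_gblk => l l' _ hl'.
under eq_bigr do rewrite mul_dlt.
by rewrite sum_if (leqW hl') inordK //; exact: leqW.
Qed.

Lemma evec_mul i k B : evec i *m gblk i.+1 k B = brow k (fun l => B i.+1 l).
Proof.
rewrite brow_mulblk; apply: eq_brow => l _.
under eq_bigr do rewrite dlt_mul.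
by rewrite sum_if ltnSn inordK.
Qed.

Lemma mul_adjevec i k B : gblk k i.+1 B *m adjmx (evec i) = bcol k (fun l => B l i.+1).
Proof.
rewrite adj_evec gblk_mulcol; apply: eq_bcol => l _.
under eq_bigr do rewrite mul_dlt.
by rewrite sum_if ltnSn inordK.
Qed.

Lemma Emx_mulcol i c : Emx i *m bcol i.+1 c = bcol i c.
Proof.
rewrite gblk_mulcol; apply: eq_bcol => l hl.
under eq_bigr do rewrite dlt_mul eq_sym.
by rewrite sum_if (leqW hl) inordK //; exact: leqW.
Qed.

Lemma evec_mulcol i c : evec i *m bcol i.+1 c = c i.+1.
Proof.
rewrite brow_mulcol.
under eq_bigr do rewrite dlt_mul.
by rewrite sum_if ltnSn inordK.
Qed.

Lemma brow_adjEmx i c : brow i.+1 c *m adjmx (Emx i) = brow i c.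
Proof.
rewrite adj_Emx brow_mulblk; apply: eq_brow => l hl.
under eq_bigr do rewrite mul_dlt.
by rewrite sum_if (leqW hl) inordK //; exact: leqW.
Qed.

Lemma brow_adjevec i c : brow i.+1 c *m adjmx (evec i) = c i.+1.
Proof.
rewrite adj_evec brow_mulcol.
under eq_bigr do rewrite mul_dlt.
by rewrite sum_if ltnSn inordK.
Qed.

Lemma EEt i : Emx i *m adjmx (Emx i) = 1%:M.
Proof. by rewrite mul_adjEmx gblk1. Qed.

Lemma eet i : evec i *m adjmx (evec i) = 1%:M.
Proof. by rewrite brow_adjevec /dlt eqxx. Qed.

Lemma Eet i : Emx i *m adjmx (evec i) = 0.
Proof.
rewrite mul_adjevec; transitivity (bcol i (fun _ => (0:'M[C]_q))); last exact: bcol0.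
apply: eq_bcol => l hl.
by rewrite /dlt ltn_eqF.
Qed.

Lemma eEt i : evec i *m adjmx (Emx i) = 0.
Proof.
rewrite brow_adjEmx; transitivity (brow i (fun _ => (0:'M[C]_q))); last exact: brow0.
apply: eq_brow => l hl.
by rewrite /dlt ltn_eqF.
Qed.

Lemma Esum i : adjmx (Emx i) *m Emx i + adjmx (evec i) *m evec i = 1%:M.
Proof.
rewrite adj_Emx adj_evec gblk_mul bcol_mulrow gblkD -gblk1.
apply: eq_gblk => l l' hl hl'.
under eq_bigr do rewrite dlt_mul eq_sym.
rewrite sum_if dlt_mul.
case: (ltnP l i.+1) => h.
  by rewrite inordK // (ltn_eqF h) addr0.
have -> : l = i.+1 by apply/eqP; rewrite eqn_leq h -ltnS hl.
by rewrite eqxx add0r dltC.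
Qed.

End Blocks.


Section Shift.
Variables (C : numClosedFieldType) (q : nat).

Lemma TmE i : Tm C q i = gblk i i (fun l k => if l == k.+1 then 1%:M else 0).
Proof. by []. Qed.

Lemma Tm_pow i k : (Tm C q i) ^+ k =
  gblk i i (fun l m => if l == (m + k)%N then 1%:M else 0).
Proof.
elim: k => [|k IH].
  rewrite expr0; transitivity (1%:M : 'M[C]_(bdim q i)) => //.
  rewrite -(gblk1 C q i); apply: eq_gblk => l m _ _.
  by rewrite addn0.
rewrite exprSr -mulmxE IH TmE gblk_mul.
apply: eq_gblk => l m hl hm.
under eq_bigr do rewrite mul_dlt.
rewrite (sum_if (fun x : 'I_i.+1 => if l == (x + k)%N then 1%:M else 0) m.+1).
case: ltnP => h; first by rewrite inordK // addSnnS.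
rewrite addnS; case: eqP => // e; move: hl; rewrite e ltnNge.
by rewrite (leq_trans h) // ltnS leq_addr.
Qed.

Lemma Tm_nil i : (Tm C q i) ^+ i.+1 = 0.
Proof.
rewrite Tm_pow; transitivity (gblk i i (fun _ _ => (0 : 'M[C]_q))); last exact: gblk0.
apply: eq_gblk => l m hl _; case: eqP => // e.
by move: hl; rewrite e ltnNge leq_addl.
Qed.

Lemma IT_unit i (w : C) : (1%:M - w *: Tm C q i) \in unitmx.
Proof.
set x : 'M[C]_(bdim q i) := w *: Tm C q i.
have hxk : forall k, x ^+ k = w ^+ k *: (Tm C q i) ^+ k.
  elim=> [|k IH]; first by rewrite !expr0 scale1r.
  by rewrite !exprSr IH /x -!mulmxE -scalemxAl -scalemxAr scalerA.
have hx : x ^+ i.+1 = 0 by rewrite hxk Tm_nil scaler0.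
have := subrX1 x i.+1; rewrite hx sub0r => h.
have : (1%:M - x) *m (\sum_(k < i.+1) x ^+ k) = 1%:M.
  rewrite mulmxE (_ : 1%:M - x = -(x - 1)); last by rewrite opprB.
  by rewrite mulNr -h opprK.
by case/mulmx1_unit.
Qed.

Lemma ET i (w : C) :
  Emx C q i *m (1%:M - w *: Tm C q i.+1) = (1%:M - w *: Tm C q i) *m Emx C q i.
Proof.
rewrite mulmxBr mulmxBl mulmx1 mul1mx -!scalemxAr -scalemxAl; congr (_ - _ *: _).
rewrite TmE Emx_mul TmE /Emx gblk_mul; apply: eq_gblk => l k hl hk.
under eq_bigr do rewrite mul_dlt.
rewrite (sum_if (fun x : 'I_i.+1 => if l == x.+1 then 1%:M else 0) k).
case: ltnP => h; first by rewrite inordK.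
case: eqP => // e; move: hl; rewrite e ltnS ltnNge.
by rewrite (ltnW h).
Qed.

Lemma ER i (w : C) : Emx C q i *m Rm q i.+1 w = Rm q i w *m Emx C q i.
Proof.
rewrite /Rm.
have u1 := IT_unit i.+1 w; have u0 := IT_unit i w.
transitivity (invmx (1%:M - w *: Tm C q i) *m ((1%:M - w *: Tm C q i) *m Emx C q i)
   *m invmx (1%:M - w *: Tm C q i.+1)).
  by rewrite mulmxA mulVmx // mul1mx.
by rewrite -ET -!mulmxA mulmxV // mulmx1.
Qed.

End Shift.


Section Main.
Variables (C : numClosedFieldType) (q : nat) (a b : C) (s : nat -> 'M[C]_q).

Lemma H2E j : H2 a b s j = gblk j j (fun l k => shat a b s (l + k)).
Proof. by []. Qed.

Lemma EHEt i : Emx C q i *m H2 a b s i.+1 *m adjmx (Emx C q i) = H2 a b s i.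
Proof. by rewrite H2E Emx_mul mul_adjEmx. Qed.

Lemma EHet i : Emx C q i *m H2 a b s i.+1 *m adjmx (evec C q i) = Y2 a b s i.
Proof.
rewrite H2E Emx_mul mul_adjevec; apply: eq_bcol => l _; by rewrite addnC.
Qed.

Lemma eHet i : evec C q i *m H2 a b s i.+1 *m adjmx (evec C q i) = shat a b s (i.+1 + i.+1).
Proof. by rewrite H2E evec_mul brow_adjevec. Qed.

Lemma eHEt i : adjmx (H2 a b s i.+1) = H2 a b s i.+1 ->
  evec C q i *m H2 a b s i.+1 *m adjmx (Emx C q i) = adjmx (Y2 a b s i).
Proof.
move=> h; rewrite -EHet !adjmx_mul adjmxK h mulmxA.
by [].
Qed.

Lemma prowE i : prow a b s i =
  - (adjmx (Y2 a b s i) *m invmx (H2 a b s i) *m Emx C q i) + evec C q i.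
Proof.
rewrite -mulNmx.
rewrite -(@submxrowK C i.+1 (fun _ => q) q (- (adjmx (Y2 a b s i) *m invmx (H2 a b s i)))).
rewrite /Emx /gblk mul_mxrow_mxblock /evec /brow -mxrowD /prow.
set M0 := - (adjmx (Y2 a b s i) *m invmx (H2 a b s i)).
apply: eq_mxrow => k.
under eq_bigr do rewrite mul_dlt.
rewrite (sum_if (fun x : 'I_i.+1 => submxrow M0 x) k) /dlt.
case: ltnP => h; first by rewrite /M0 mulNmx (ltn_eqF h) addr0.
have -> : (k : nat) = i.+1 by apply/eqP; rewrite eqn_leq h -ltnS ltn_ord.
by rewrite eqxx add0r.
Qed.


Lemma pd_down k : posdef (H2 a b s k.+1) -> posdef (H2 a b s k).
Proof. by move=> h; rewrite -EHEt; apply: posdef_comp h (EEt C q k). Qed.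

Lemma pd_le N k : posdef (H2 a b s N) -> (k <= N)%N -> posdef (H2 a b s k).
Proof.
elim: N => [|N IH] h hk; first by move: hk; rewrite leqn0 => /eqP ->.
case: (ltngtP k N.+1) hk => // [hk _|-> _ //].
by apply: IH; [apply: pd_down|].
Qed.

Definition Fv j w := Rm q j w *m vv C q j.
Definition Gv j w := Rm q j w *m (u2 a b s j + w *: (vv C q j *m s 0)).

Lemma EF i w : Emx C q i *m Fv i.+1 w = Fv i w.
Proof. by rewrite /Fv mulmxA ER -mulmxA /vv Emx_mulcol. Qed.

Lemma EG i w : Emx C q i *m Gv i.+1 w = Gv i w.
Proof.
rewrite /Gv mulmxA ER -mulmxA mulmxDr -scalemxAr mulmxA.
by rewrite /vv /u2 !Emx_mulcol.
Qed.

Lemma P2E i w : P2 a b s i.+1 w = prow a b s i *m Fv i.+1 w.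
Proof. by rewrite /P2 /Fv mulmxA. Qed.

Lemma Q2E i w : Q2 a b s i.+1 w = - (prow a b s i *m Gv i.+1 w).
Proof. by rewrite /Q2 /Gv mulmxA. Qed.

Hypothesis hs0 : adjmx (s 0) = s 0.

Lemma adjGv j z : adjmx (Gv j (Num.conj z)) =
  (adjmx (u2 a b s j) + z *: (s 0 *m adjmx (vv C q j))) *m adjmx (Rm q j (Num.conj z)).
Proof. by rewrite /Gv adjmx_mul adjmxD adjmxZ conjCK adjmx_mul hs0. Qed.

Lemma alphaE j z : alpha2 a b s j z =
  1%:M - (z - a) *: (adjmx (Gv j (Num.conj z)) *m invmx (H2 a b s j) *m Fv j a).
Proof. by rewrite adjGv /alpha2 /Fv !mulmxA. Qed.

Lemma betaE j z : beta2 a b s j z =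
  (z - a) *: (s 0 + adjmx (Gv j (Num.conj z)) *m invmx (H2 a b s j) *m Gv j a).
Proof. by rewrite adjGv /beta2 /Gv !mulmxA. Qed.

Lemma gammaE j z : gamma2 a b s j z =
  - ((z - a) *: (adjmx (Fv j (Num.conj z)) *m invmx (H2 a b s j) *m Fv j a)).
Proof. by rewrite /gamma2 /Fv adjmx_mul !mulmxA. Qed.

Lemma deltaE j z : delta2 a b s j z =
  1%:M + (z - a) *: (adjmx (Fv j (Num.conj z)) *m invmx (H2 a b s j) *m Gv j a).
Proof. by rewrite /delta2 /Fv /Gv adjmx_mul !mulmxA. Qed.

End Main.


Unset Implicit Arguments. Set Strict Implicit. Set Printing Implicit Defensive.

Theorem mainTheorem1 (C : numClosedFieldType) (q n : nat) (a b : C)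
  (s : nat -> 'M[C]_q) :
  (0 < q)%N ->
  a \is Num.real -> b \is Num.real -> a < b ->
  (forall k, (k <= (n + n).+1)%N -> s k = adjmx (s k)) ->
  posdef (H1 s n) -> posdef (H2 a b s n.-1) ->
  posdef (K1 b s n) -> posdef (K2 a s n) ->
  forall j : nat, (1 <= j)%N -> (j <= n - 1)%N -> forall z : C,
    [/\ alpha2 a b s j z = alpha2 a b s j.-1 z
          + (z - a) *: (adjmx (Q2 a b s j (Num.conj z)) *m invmx (H2hat a b s j)
                         *m P2 a b s j a),
        beta2 a b s j z = beta2 a b s j.-1 z
          + (z - a) *: (adjmx (Q2 a b s j (Num.conj z)) *m invmx (H2hat a b s j)
                         *m Q2 a b s j a),
        gamma2 a b s j z = gamma2 a b s j.-1 z
          - (z - a) *: (adjmx (P2 a b s j (Num.conj z)) *m invmx (H2hat a b s j)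
                         *m P2 a b s j a)
      & delta2 a b s j z = delta2 a b s j.-1 z
          - (z - a) *: (adjmx (P2 a b s j (Num.conj z)) *m invmx (H2hat a b s j)
                         *m Q2 a b s j a)].
Proof.
move=> _ _ _ _ hs _ hH2 _ _ j j1 jn z.
case: j j1 jn => // i _ jn.
have hs0 : adjmx (s 0) = s 0 by rewrite -hs.
have jn' : (i.+1 <= n.-1)%N by rewrite -subn1.
have pd1 := pd_le hH2 jn'.
have pd0 := pd_le hH2 (ltnW jn').
have Au := posdef_unit pd0.
have Ah := posdef_herm pd0.
have Hh := posdef_herm pd1.
pose E := Emx C q i. pose e := evec C q i.
have hEE := EEt C q i. have hee := eet C q i. have hEe := Eet C q i.
have heE := eEt C q i. have hsum := Esum C q i.
have hA := EHEt a b s i. have hY := EHet a b s i. have hY' := eHEt (i:=i) Hh.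
have hD := eHet a b s i.
have Pdef := prowE a b s i.
have Sdef : H2hat a b s i.+1 = shat a b s (i.+1 + i.+1)
   - adjmx (Y2 a b s i) *m invmx (H2 a b s i) *m Y2 a b s i by [].
have Spd : posdef (H2hat a b s i.+1).
  rewrite Sdef -(schur_hat hEE hee hEe heE hsum hA hY hY' hD Au Ah) -Pdef.
  apply: posdef_comp pd1 _.
  by rewrite Pdef; apply: (eadjP hEE hee hEe heE hsum hA hY hY' hD Au Ah).
have Su := posdef_unit Spd.
have invH := schur_inv hEE hee hEe heE hsum hA hY hY' hD Au Ah.
rewrite -Sdef -Pdef in invH.
have key : forall X Z : 'M[C]_(bdim q i.+1, q),
  adjmx X *m invmx (H2 a b s i.+1) *m Z =
  adjmx (Emx C q i *m X) *m invmx (H2 a b s i) *m (Emx C q i *m Z)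
  + adjmx (prow a b s i *m X) *m invmx (H2hat a b s i.+1) *m (prow a b s i *m Z).
  move=> X Z; rewrite invH // (adjmx_mul (Emx C q i) X) (adjmx_mul (prow a b s i) X) mulmxDr mulmxDl !mulmxA.
  by [].
rewrite !alphaE // !betaE // !gammaE // !deltaE // !P2E !Q2E !key !EF !EG.
rewrite (_ : i.+1.-1 = i) //.
by split; rewrite ?adjmxN ?mulNmx ?mulmxN ?opprK ?scalerN ?scalerDr ?opprD ?addrA ?opprK.
Qed.
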